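(* Let $M$ be a finite abelian group of even order and exponent greater than $2$, written as $M=C_{2i_1}\times\cdots\times C_{2i_s}\times M_1$ with $M_1$ of odd order, $s\geq 1$, and $i_j\geq 1$ for all $j$. Then $|\mathcal{H}_M|=4^s$.
   Context: $C_n$ denotes the cyclic group of order $n$. Let $K=\{1,a,b,c\}$ be the Klein four-group. Set $L_M=K\times M$ with the operation $(A,x)*(B,y)=(AB,xy)$ if $B=1$, and $(A,x)*(B,y)=(AB,x^{-1}y)$ if $B\neq 1$. Write $(1,M)=\{(1,x):x\in M\}$. Let $\mathcal{H}_M$ be the set of subloops $H$ of $L_M$ that are isomorphic to $K$ and satisfy $|H\cap(1,M)|=1$. *)

(* Defs.v *)
From mathcomp Require Import all_boot all_order all_fingroup all_solvable.
Set Implicit Arguments. Unset Strict Implicit. Unset Printing Implicit Defensive.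
Local Open Scope group_scope.

(* Klein four-group K = {1,a,b,c}, modelled as bool*bool with componentwise xor;
   1 = (false,false), a = (true,false), b = (false,true), c = (true,true). *)
Definition Ktype := (bool * bool)%type.
Definition K1 : Ktype := (false, false).
Definition Kmul (u v : Ktype) : Ktype := (xorb u.1 v.1, xorb u.2 v.2).

Section Loop.
Variable gT : finGroupType.

Definition Ltype := (Ktype * gT)%type.

Definition Lmul (p q : Ltype) : Ltype :=
  (Kmul p.1 q.1, if q.1 == K1 then p.2 * q.2 else p.2^-1 * q.2).

Definition is_subloop (H : {set Ltype}) : bool :=
  [&& H != set0,
      [forall x in H, forall y in H, Lmul x y \in H] &
      [forall x in H, forall y in H,
         [exists z in H, Lmul x z == y] && [exists w in H, Lmul w x == y]]].

Definition iso_to_K (H : {set Ltype}) : bool :=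
  [exists f : {ffun Ktype -> Ltype},
     [&& injectiveb f, f @: setT == H &
         [forall u, forall v, f (Kmul u v) == Lmul (f u) (f v)]]].

Definition oneM : {set Ltype} := [set p | p.1 == K1].

Definition HM : {set {set Ltype}} :=
  [set H | [&& is_subloop H, iso_to_K H & #|H :&: oneM| == 1%N]].

End Loop.

(* Main.v *)
Require Import Defs.
From mathcomp Require Import all_boot all_order all_fingroup all_solvable.
Set Implicit Arguments. Unset Strict Implicit. Unset Printing Implicit Defensive.
Local Open Scope group_scope.
From mathcomp Require Import zify.
Section Om.
Variable gT : finGroupType.
Definition Om (A : {set gT}) := [set x in A | x ^+ 2 == 1].

Lemma Om_dprod A B (G : {group gT}) : A \x B = G -> (#|Om A| * #|Om B|)%N = #|Om G|.
Proof.
move=> dG; have [[HA HB eA eB] defG cAB tiAB] := dprodP dG; subst A B.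
have E : [set p.1 * p.2 | p in setX (Om HA) (Om HB)] = Om G.
  apply/setP => g; apply/imsetP/setIdP.
  + case=> [[a b]] /setXP [] /setIdP [Ha a2] /setIdP [Hb b2] -> /=.
    split; first by rewrite -defG mem_mulg.
    have cab : commute a b by have := centsP cAB b Hb a Ha.
    by rewrite expgMn // (eqP a2) (eqP b2) mulg1.
  + rewrite -defG => -[/mulsgP [a b Ha Hb ->]] ab2.
    have cab : commute a b by have := centsP cAB b Hb a Ha.
    move: ab2; rewrite expgMn // => /eqP ab2.
    have a2 : a ^+ 2 = 1.
      have : a ^+ 2 \in HA :&: HB.
        rewrite inE groupX //=.
        have -> : a^+2 = (b^+2)^-1 by rewrite -[a^+2](mulgK (b^+2)) ab2 mul1g.
        by rewrite groupV groupX.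
      by rewrite tiAB => /set1P.
    exists (a, b) => //; rewrite inE /= !inE Ha Hb a2 eqxx /=.
    by move: ab2; rewrite a2 mul1g => ->.
rewrite -E card_in_imset ?cardsX //.
move=> [a1 b1] [a2 b2] /setXP [] /setIdP [Ha1 _] /setIdP [Hb1 _]
     /setXP [] /setIdP [Ha2 _] /setIdP [Hb2 _] /= e.
  have : a2^-1 * a1 \in HA :&: HB.
    rewrite inE groupM ?groupV //=.
    have -> : a2^-1 * a1 = b2 * b1^-1.
      by rewrite -[a1](mulgK b1) e !mulgA mulVg mul1g.
    by rewrite groupM ?groupV.
  rewrite tiAB => /set1P /eqP; rewrite -eq_mulVg1 => /eqP a21.
  by subst a2; move/mulgI: e => ->.
Qed.

Lemma Om_bigdprod I r (P : pred I) E (G : {group gT}) :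
    \big[dprod/1]_(i <- r | P i) E i = G ->
  (\prod_(i <- r | P i) #|Om (E i)|)%N = #|Om G|.
Proof.
elim/big_rec2: _ G => [G <- | i A B _ IH G defG].
  rewrite (_ : Om 1 = 1) ?cards1 //; apply/setP=> x; rewrite !inE.
  by apply: andb_idr => /eqP ->; rewrite expg1n.
have [[_ H _ defH] _ _ _] := dprodP defG.
by rewrite -(Om_dprod defG) (IH H defH) defH.
Qed.

Lemma Om_odd (H : {group gT}) : odd #|H| -> #|Om H| = 1%N.
Proof.
move=> oH; apply/eqP/cards1P; exists (1 : gT); apply/setP=> x; rewrite !inE.
apply/andP/eqP => [[Hx x2] | ->]; last by rewrite group1 expg1n.
have o2 : (#[x] %| 2)%N by rewrite order_dvdn.
have oG : (#[x] %| #|H|)%N by rewrite order_dvdG.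
apply/eqP; rewrite -order_eq1.
have : (#[x] %| gcdn 2 #|H|)%N by rewrite dvdn_gcd o2.
rewrite (_ : gcdn 2 #|H| = 1%N) ?dvdn1 //.
apply/eqP; rewrite -/(coprime 2 _) prime_coprime // dvdn2 oH //.
Qed.

Lemma Om_cyclic (C : {group gT}) k : cyclic C -> #|C| = (2 * k)%N -> (0 < k)%N ->
  #|Om C| = 2.
Proof.
move=> /cyclicP [g ->] og k0; rewrite -orderE in og.
have gk2 : (g ^+ k) ^+ 2 = 1 by rewrite -expgM mulnC -og expg_order.
have gk1 : g ^+ k != 1.
  by rewrite -order_dvdn og; apply/negP => /dvdn_leq; lia.
rewrite (_ : Om _ = [set 1; g ^+ k]); first by rewrite cards2 eq_sym gk1.
apply/setP=> x; rewrite !inE; apply/andP/orP.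
- case=> /cycleP [m ->] /eqP; rewrite -expgM => /eqP.
  rewrite -order_dvdn og => d.
  rewrite -(expg_mod_order g m) og.
  have : (k %| m)%N by rewrite -(dvdn_pmul2l (isT : 0 < 2)%N) [(2 * m)%N]mulnC.
  case/dvdnP=> q ->.
  have : (q * k %% (2 * k) = 0 \/ q * k %% (2 * k) = k)%N.
    rewrite -muln_modl // modn2; case: (odd q); rewrite ?mul0n ?mul1n; by [left|right].
  by case=> ->; [left; rewrite expg0 | right].
- case=> /eqP ->; split; rewrite ?group1 ?expg1n // ?mem_cycle //.
  by rewrite gk2.
Qed.
End Om.
Lemma KmulKK u : Kmul u u = K1. Proof. by case: u => [[] []]. Qed.
Lemma Kmul1 u : Kmul K1 u = u. Proof. by case: u => [[] []]. Qed.
Lemma KmulC u v : Kmul u v = Kmul v u. Proof. by case: u v => [[] []] [[] []]. Qed.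
Lemma KmulKA u v : Kmul u (Kmul u v) = v. Proof. by case: u v => [[] []] [[] []]. Qed.
Lemma KmulKA' u v : Kmul (Kmul u v) u = v. Proof. by case: u v => [[] []] [[] []]. Qed.
Lemma KmulE1 u v : Kmul u v = K1 -> u = v. Proof. by case: u v => [[] []] [[] []]. Qed.

Section Loop2.
Variable gT : finGroupType.
Hypothesis cT : forall a b : gT, a * b = b * a.

Definition gfun (x y : gT) (u : Ktype) : gT :=
  match u with
  | (false, false) => 1
  | (true, false) => x
  | (false, true) => y
  | (true, true) => x * y
  end.

Definition mkH x y : {set Ltype gT} := [set (u, gfun x y u) | u : Ktype].

Section XY.
Variables x y : gT.
Hypothesis x2 : x * x = 1.
Hypothesis y2 : y * y = 1.

Lemma xV : x^-1 = x. Proof. by apply/eqP; rewrite eq_invg_mul x2. Qed.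
Lemma yV : y^-1 = y. Proof. by apply/eqP; rewrite eq_invg_mul y2. Qed.

Lemma gfun_inv u : (gfun x y u)^-1 = gfun x y u.
Proof. by case: u => [[] []] /=; rewrite ?invg1 ?xV ?yV // invMg xV yV cT. Qed.

Lemma gfun_mul u v : gfun x y (Kmul u v) = gfun x y u * gfun x y v.
Proof.
case: u v => [[] []] [[] []] /=; rewrite ?mul1g ?mulg1 ?x2 ?y2 //.
- by rewrite -mulgA (mulgA y x) (cT y x) -(mulgA x y y) y2 mulg1 x2.
- by rewrite (cT x y) -mulgA x2 mulg1.
- by rewrite -mulgA y2 mulg1.
- by rewrite mulgA x2 mul1g.
- by rewrite (cT x y) mulgA y2 mul1g.
Qed.

Lemma Lmul_graph u v :
  Lmul (u, gfun x y u) (v, gfun x y v) = (Kmul u v, gfun x y (Kmul u v)).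
Proof. by rewrite /Lmul gfun_inv if_same gfun_mul. Qed.

Lemma mkH_in : mkH x y \in HM gT.
Proof.
rewrite inE; apply/and3P; split.
- apply/and3P; split.
  + by apply/set0Pn; exists (K1, 1); apply/imsetP; exists K1.
  + apply/forall_inP => p /imsetP [u _ ->]; apply/forall_inP => q /imsetP [v _ ->].
    by rewrite Lmul_graph; apply: imset_f.
  + apply/forall_inP => p /imsetP [u _ ->]; apply/forall_inP => q /imsetP [v _ ->].
    apply/andP; split; apply/exists_inP.
    * exists (Kmul u v, gfun x y (Kmul u v)); first exact: imset_f.
      by rewrite Lmul_graph KmulKA.
    * exists (Kmul u v, gfun x y (Kmul u v)); first exact: imset_f.
      by rewrite Lmul_graph KmulKA'.
- apply/existsP; exists [ffun u => (u, gfun x y u)]; apply/and3P; split.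
  + by apply/injectiveP => u v; rewrite !ffunE => -[].
  + apply/eqP/setP => p; apply/imsetP/imsetP => -[u _ ->]; exists u => //;
      by rewrite ffunE.
  + by apply/forallP => u; apply/forallP => v; rewrite !ffunE Lmul_graph.
- apply/cards1P; exists (K1, 1); apply/setP => p; rewrite !inE.
  apply/andP/eqP => [[/imsetP [u _ ->]] /=|->]; last first.
    by split => //; apply/imsetP; exists K1.
  by move/eqP => ->.
Qed.
End XY.

Lemma card_mkH x y : #|mkH x y| = 4.
Proof. by rewrite card_imset ?card_prod ?card_bool // => u v [->]. Qed.

Lemma mkH_inv H : H \in HM gT -> exists x y, [/\ x * x = 1, y * y = 1 & H = mkH x y].
Proof.
rewrite inE => /and3P [_ hiso hcard].
case/existsP: hiso => f /and3P [/injectiveP finj /eqP fim /forallP fhom].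
have fh u v : f (Kmul u v) = Lmul (f u) (f v) by apply/eqP; apply: (forallP (fhom u)).
have Hf u : f u \in H by rewrite -fim; apply: imset_f; rewrite inE.
have e1 : f K1 = (K1, 1).
  have := fh K1 K1; rewrite [Kmul K1 K1]/=.
  case E: (f K1) => [w z]; rewrite /Lmul /=.
  case: ifP => [/eqP w1 [_ ] | wn [ ]].
    move=> zz; have : z^-1 * z = z^-1 * (z * z) by rewrite -zz.
    by rewrite mulKg mulVg w1 => <-.
  by rewrite KmulKK => wK; rewrite wK eqxx in wn.
have fK u : (f u).1 = K1 -> u = K1.
  move=> fu; case/cards1P: hcard => z hz.
  have : f u \in H :&: oneM gT by rewrite inE Hf inE fu eqxx.
  have : f K1 \in H :&: oneM gT by rewrite inE Hf inE e1 eqxx.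
  by rewrite hz => /set1P e2 /set1P e3; apply: finj; rewrite e2 e3.
pose phi u := (f u).1.
have phiinj : injective phi.
  move=> u v e; apply: KmulE1; apply: fK.
  by rewrite fh /Lmul /= -/(phi u) -/(phi v) e KmulKK.
have [ua ea] : exists ua, phi ua = (true, false).
  by case/codomP: (injF_onto phiinj (true, false)) => w ->; exists w.
have [ub eb] : exists ub, phi ub = (false, true).
  by case/codomP: (injF_onto phiinj (false, true)) => w ->; exists w.
set x := (f ua).2; set y := (f ub).2.
have fa : f ua = ((true, false), x) by rewrite -ea /phi -surjective_pairing.
have fb : f ub = ((false, true), y) by rewrite -eb /phi -surjective_pairing.
have fc : f (Kmul ua ub) = ((true, true), x^-1 * y) by rewrite fh fa fb.
have x2 : x * x = 1.
  have := fh ua (Kmul ua ub); rewrite KmulKA fc fa fb /Lmul /= => -[].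
  move=> e; have : 1 * y = (x^-1 * x^-1) * y by rewrite mul1g -mulgA -e.
  move/mulIg => e'; apply: invg_inj; by rewrite invMg -e' invg1.
have y2 : y * y = 1.
  have := fh ub ua; rewrite (KmulC ub ua) fc fa fb /Lmul /= => -[].
  rewrite (xV x2) cT => /mulIg e.
  by rewrite {1}e mulVg.
exists x, y; split => //.
apply/eqP; rewrite eq_sym eqEcard card_mkH; apply/andP; split.
  apply/subsetP => p /imsetP [u _ ->]; case: u => [[] []] /=.
  - by rewrite -(xV x2) -fc.
  - by rewrite -fa.
  - by rewrite -fb.
  - by rewrite -e1.
rewrite -fim; apply: leq_trans (leq_imset_card _ _) _.
by rewrite cardsT card_prod card_bool.
Qed.

Lemma card_HM : #|HM gT| = (#|Om [set: gT]| * #|Om [set: gT]|)%N.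
Proof.
have om x : (x \in Om [set: gT]) = (x * x == 1) by rewrite !inE expgS expg1.
have -> : HM gT = [set mkH p.1 p.2 | p in setX (Om [set: gT]) (Om [set: gT])].
  apply/setP => H; apply/idP/imsetP.
    case/mkH_inv => x [y [x2 y2 ->]]; exists (x, y) => //.
    by rewrite inE /= !om x2 y2 eqxx.
  case=> -[x y] /setXP [] /=; rewrite !om => /eqP x2 /eqP y2 ->.
  exact: mkH_in.
rewrite card_in_imset ?cardsX // => -[x y] [x' y'] _ _ /= e.
have : ((true, false), x) \in mkH x' y' by rewrite -e; apply: imset_f.
have : ((false, true), y) \in mkH x' y' by rewrite -e; apply: imset_f.
by move=> /imsetP [u _ [<- ->]] /imsetP [v _ [<- ->]].
Qed.
End Loop2.

Theorem corollary4p6 (gT : finGroupType) (s : nat) (i : 'I_s -> nat)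
    (C : 'I_s -> {group gT}) (M1 : {group gT}) :
  abelian [set: gT] ->
  ~~ odd #|[set: gT]| ->
  (2 < exponent [set: gT])%N ->
  (0 < s)%N ->
  (forall j, 0 < i j)%N ->
  (forall j, cyclic (C j) /\ #|C j| = (2 * i j)%N) ->
  odd #|M1| ->
  dprod (\big[dprod/1]_(j < s) C j) M1 = [set: gT] ->
  #|HM gT| = (4 ^ s)%N.
Proof.
move=> ab _ _ _ ipos hC oM1 dG.
have cT : forall a b : gT, a * b = b * a.
  by move=> a b; have := centsP ab b (in_setT b) a (in_setT a).
rewrite (card_HM cT).
have [[Pg _ defP _] _ _ _] := dprodP dG.
rewrite -(Om_dprod dG) (Om_odd oM1) muln1 defP -(Om_bigdprod defP).
rewrite (eq_bigr (fun _ => 2%N)); last first.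
  by move=> j _; case: (hC j) => cj oj; apply: (Om_cyclic cj oj).
by rewrite prod_nat_const card_ord -expnMn.
Qed.
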